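(* Let $d\ge 1$ and let $D$ be a collection of at most $d$ simplices over $[n]$, each of dimension at most $d$. Then every $(d-1)$-cycle supported on $K(D)$ is a $(d-1)$-boundary of $K(D)$; that is, every such cycle $Z$ can be written as $Z=\sum_{\sigma\in D,\ \dim\sigma=d} c_\sigma\,\partial\sigma$ with $c_\sigma\in\mathbb F$. Equivalently, $\tilde H_{d-1}(K(D))=0$.
   Context: Fix a field $\mathbb F$ and an integer $n\ge 1$. A $d$-simplex is a subset $\sigma\subseteq[n]$ with $|\sigma|=d+1$, oriented by listing its elements in increasing order $s_1<\dots<s_{d+1}$; the empty set is the unique $(-1)$-simplex. A simplicial complex is a family of simplices closed under taking subsets (faces). For a set $S$ of simplices, $K(S)$ denotes the simplicial complex consisting of all subsets of members of $S$. A $d$-chain is a formal $\mathbb F$-linear combination of $d$-simplices; its support $\mathrm{Supp}$ is the set of simplices with nonzero coefficient, and it is supported on a complex $K$ if its support lies in $K$. The boundary operator is $\partial\sigma=\sum_{i=1}^{d+1}(-1)^{i-1}(\sigma\setminus\{s_i\})$, extended linearly (so the boundary of a vertex is the empty simplex; reduced homology convention). A $d$-cycle is a $d$-chain $Z$ with $\partial Z=0$; it is a $d$-boundary of $K$ if $Z=\partial B$ for some $(d+1)$-chain $B$ supported on $K$. $\tilde H_d(K)$ is the quotient of the space of $d$-cycles supported on $K$ by the space of $d$-boundaries of $K$. *)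

(* Defs.v *)
From HB Require Import structures.
From mathcomp Require Import all_boot all_order all_algebra.
Set Implicit Arguments. Unset Strict Implicit. Unset Printing Implicit Defensive.
Import Order.TTheory GRing.Theory Num.Theory.
Local Open Scope ring_scope.

(* A simplex over [n] is a finite set of vertices; a k-simplex has k+1 elements;
   set0 is the unique (-1)-simplex. *)
Definition simplex (n : nat) := {set 'I_n}.

(* Chains: formal F-linear combinations of simplices (finite, so all functions). *)
Notation chain F n := {ffun {set 'I_n} -> F%type} (only parsing).

Definition Supp (F : fieldType) (n : nat) (c : chain F n) : {set {set 'I_n}} :=
  [set s | c s != 0].

Definition is_chain_of_size (F : fieldType) (n : nat) (m : nat) (c : chain F n) :=
  forall s, s \in Supp c -> #|s| = m.

Definition Kcx (n : nat) (S : {set {set 'I_n}}) : {set {set 'I_n}} :=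
  [set t : {set 'I_n} | [exists s in S, t \subset s]].

Definition supported_on (F : fieldType) (n : nat) (c : chain F n) (K : {set {set 'I_n}}) :=
  Supp c \subset K.

(* Boundary of a single simplex s = {s_1 < ... < s_(k+1)}:
   sum_i (-1)^(i-1) (s \ {s_i}); the index of vertex v in s (0-based) is
   #|{ j in s | j < v }|. *)
Definition bd_simplex (F : fieldType) (n : nat) (s : {set 'I_n}) : chain F n :=
  [ffun t => \sum_(v in s)
      (if s :\ v == t then (-1) ^+ #|[set j in s | (nat_of_ord j < nat_of_ord v)%N]| else 0)].

Definition bd (F : fieldType) (n : nat) (c : chain F n) : chain F n :=
  [ffun t => \sum_(s : {set 'I_n}) c s * bd_simplex F s t].

(* Main.v *)
Require Import Defs.
From HB Require Import structures.
From mathcomp Require Import all_boot all_order all_algebra.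
Set Implicit Arguments. Unset Strict Implicit. Unset Printing Implicit Defensive.
Import GRing.Theory.
Local Open Scope ring_scope.

Section Chains.
Variables (F : fieldType) (n : nat).
Notation ch := {ffun {set 'I_n} -> F}.

Definition eps (r : {set 'I_n}) (u : 'I_n) : F :=
  (-1) ^+ #|[set j in r | (nat_of_ord j < nat_of_ord u)%N]|.

Lemma bdE (c : ch) r :
  bd c r = \sum_u (if u \notin r then eps r u * c (u |: r) else 0).
Proof.
rewrite ffunE.
transitivity (\sum_(s : {set 'I_n}) \sum_(u : 'I_n) (if (u \in s) && (s :\ u == r) then
                c s * (-1) ^+ #|[set j in s | (nat_of_ord j < nat_of_ord u)%N]| else 0)).
  apply: eq_bigr => s _; rewrite ffunE big_distrr /= big_mkcond /=.
  apply: eq_bigr => u _; case: (u \in s) => //=.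
  by case: ifP => _; rewrite ?mulr0.
rewrite exchange_big /=; apply: eq_bigr => u _.
case: (boolP (u \in r)) => ur /=.
  apply: big1 => s _; case: (u \in s) => //=; case: eqP => // e; rewrite -e in ur.
  by rewrite setD11 in ur.
rewrite (bigD1 (u |: r)) //= setU11 setU1K // eqxx /= big1 ?addr0.
  rewrite mulrC /eps; congr (_ * _); congr ((-1) ^+ _); apply: eq_card => j.
  by rewrite !inE; case: (eqVneq j u) => //= ->; rewrite ltnn !andbF.
move=> s ne; case: (boolP (u \in s)) => //= us; case: eqP => // e.
by move: ne; rewrite -e setD1K ?eqxx.
Qed.

Lemma bd_supp (c : ch) r : bd c r != 0 -> exists2 u, u \notin r & c (u |: r) != 0.
Proof.
rewrite bdE => H; apply/exists_inP; apply: contraNT H => /exists_inPn H.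
apply/eqP; apply: big1 => u _; case: ifP => // ur.
by move: (H u ur); rewrite negbK => /eqP ->; rewrite mulr0.
Qed.

Lemma eps_add_lt (r : {set 'I_n}) (u w : 'I_n) : u \notin r -> (u < w)%N -> eps (u |: r) w = - eps r w.
Proof.
move=> ur uw; rewrite /eps.
have -> : [set j in u |: r | (nat_of_ord j < nat_of_ord w)%N] =
          u |: [set j in r | (nat_of_ord j < nat_of_ord w)%N].
  by apply/setP => j; rewrite !inE; case: (eqVneq j u) => //= ->; rewrite uw.
by rewrite cardsU1 inE (negbTE ur) /= add1n exprS mulN1r.
Qed.

Lemma eps_add_ge (r : {set 'I_n}) (u w : 'I_n) : (w <= u)%N -> eps (u |: r) w = eps r w.
Proof.
move=> wu; rewrite /eps; congr ((-1) ^+ _); apply: eq_card => j.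
by rewrite !inE; case: (eqVneq j u) => //= ->; rewrite ltnNge wu andbF.
Qed.

Lemma bdbd (c : ch) r : bd (bd c) r = 0.
Proof.
pose G u w := if (u \notin r) && (w \notin u |: r) then
   eps r u * eps (u |: r) w * c (w |: (u |: r)) else 0.
transitivity (\sum_u \sum_w G u w).
  rewrite bdE; apply: eq_bigr => u _; rewrite /G.
  case: (u \notin r) => /=; last by rewrite big1.
  rewrite bdE big_distrr; apply: eq_bigr => w _.
  by case: ifP => _; [apply: mulrA | apply: mulr0].
have key : forall u w : 'I_n, (u < w)%N -> G u w + G w u = 0.
  move=> u w uw; rewrite /G !inE.
  have nuw : (u == w) = false by apply: contraTF uw => /eqP ->; rewrite ltnn.
  rewrite [w == u]eq_sym nuw /=.
  case: (boolP (u \in r)) => ur; first by rewrite andbF addr0.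
  case: (boolP (w \in r)) => wr; first by rewrite addr0.
  rewrite (eps_add_lt ur uw) (eps_add_ge r (ltnW uw)).
  have -> : w |: (u |: r) = u |: (w |: r) by rewrite setUCA.
  by rewrite mulrN mulNr (mulrC (eps r w)) /= addNr.
have split1 : forall u w, G u w = (if (u < w)%N then G u w else 0)
                                 + (if (w < u)%N then G u w else 0).
  move=> u w; case: ltngtP => h; rewrite ?addr0 ?add0r //.
  have e : u = w by apply: val_inj.
  by rewrite /G e setU11 andbF.
rewrite (eq_bigr (fun u : 'I_n => \sum_(w : 'I_n) ((if (u < w)%N then G u w else 0)
                                 + (if (w < u)%N then G u w else 0)))); last first.
  by move=> u _; apply: eq_bigr => w _; apply: split1.
rewrite (eq_bigr (fun u : 'I_n => \sum_(w : 'I_n) (if (u < w)%N then G u w else 0)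
                         + \sum_(w : 'I_n) (if (w < u)%N then G u w else 0))); last first.
  by move=> u _; rewrite big_split.
rewrite big_split /= [X in _ + X]exchange_big /= -big_split /=.
apply: big1 => u _; rewrite -big_split; apply: big1 => w _ /=.
by case: ifP => h; rewrite ?addr0 // key.
Qed.

Definition cone (v : 'I_n) (c : ch) : ch :=
  [ffun t : {set 'I_n} => if v \in t then c (t :\ v) else 0].

Lemma eps_min (r : {set 'I_n}) (v : 'I_n) :
  (forall j, j \in r -> (v <= j)%N) -> eps r v = 1.
Proof.
move=> h; rewrite /eps; have -> : [set j in r | (nat_of_ord j < nat_of_ord v)%N] = set0.
  apply/setP => j; rewrite !inE; case: (boolP (j \in r)) => //= jr.
  by rewrite ltnNge h.
by rewrite cards0 expr0.
Qed.

Lemma cone_id (v : 'I_n) (c : ch) :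
  (forall t : {set 'I_n}, c t != 0 -> forall j, j \in t -> (v <= j)%N) ->
  forall r, bd (cone v c) r + cone v (bd c) r = c r.
Proof.
move=> hc r; rewrite [cone v (bd c) r]ffunE.
case: (boolP (v \in r)) => vr.
  rewrite bdE [bd c _]bdE -big_split /= (bigD1 v) //= big1 ?addr0.
    rewrite vr /= !inE eqxx /= add0r setD1K //.
    case: (eqVneq (c r) 0) => [->|cr]; first by rewrite mulr0.
    rewrite eps_min ?mul1r // => j; rewrite inE => /andP [_ jr]; exact: hc cr j jr.
  move=> u uv; rewrite !inE uv /= ffunE !inE eq_sym (negbTE uv) vr /=.
  have e : (u |: r) :\ v = u |: (r :\ v).
    by apply/setP => j; rewrite !inE; case: (eqVneq j v) => // ->; rewrite eq_sym (negbTE uv).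
  rewrite e; case: (boolP (u \in r)) => ur /=; first by rewrite addr0.
  case: (eqVneq (c (u |: (r :\ v))) 0) => [->|cu]; first by rewrite !mulr0 addr0.
  have vu : (v < u)%N.
    rewrite ltn_neqAle (hc _ cu u (setU11 _ _)) andbT.
    by apply: contra uv => /eqP h; apply/eqP; apply: val_inj.
  have -> : eps r u = - eps (r :\ v) u.
    by rewrite -{1}(setD1K vr) eps_add_lt // !inE eqxx.
  by rewrite mulNr addNr.
rewrite addr0 bdE (bigD1 v) //= big1 ?addr0.
  rewrite vr /= ffunE setU11 setU1K //.
  case: (eqVneq (c r) 0) => [->|cr]; first by rewrite mulr0.
  by rewrite eps_min ?mul1r // => j jr; exact: hc cr j jr.
move=> u uv; rewrite ffunE !inE (negbTE vr) orbF eq_sym (negbTE uv).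
by case: ifP => // _; rewrite mulr0.
Qed.

Definition sin (c : ch) (P : {set 'I_n} -> Prop) := forall t, c t != 0 -> P t.

Definition zch : ch := [ffun => 0].

Lemma bd_z r : bd zch r = 0.
Proof. by rewrite bdE big1 // => u _; rewrite ffunE mulr0; case: ifP. Qed.

Lemma cone_acyc (S : {set 'I_n}) m (c : ch) : (0 < m)%N ->
  sin c (fun t => #|t| = m) -> sin c (fun t => t \subset S) ->
  (forall r, bd c r = 0) ->
  exists B : ch, [/\ sin B (fun t => #|t| = m.+1), sin B (fun t => t \subset S)
                   & forall r, c r = bd B r].
Proof.
move=> m0 hm hS hcyc; case: (set_0Vmem S) => [S0 | [v0 v0S]].
  exists zch; split => //; try by move=> t; rewrite ffunE eqxx.
  move=> r; rewrite bd_z; apply/eqP; apply: contraT => cr.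
  have := hS r cr; rewrite S0 subset0 => /eqP r0.
  by move: (hm r cr); rewrite r0 cards0 => m0'; rewrite -m0' in m0.
case: (@arg_minnP _ v0 (mem S) (@nat_of_ord n) v0S) => v vS vmin.
have hc : forall t : {set 'I_n}, c t != 0 -> forall j, j \in t -> (v <= j)%N.
  by move=> t ct j jt; apply: vmin; apply: (subsetP (hS t ct)).
exists (cone v c); split.
- move=> t; rewrite ffunE; case: ifP => vt; last by rewrite eqxx.
  by move=> /hm; rewrite (cardsD1 v t) vt => ->.
- move=> t; rewrite ffunE; case: ifP => vt; last by rewrite eqxx.
  move=> /hS h; rewrite -(setD1K vt) subUset h andbT sub1set //.
move=> r; rewrite -(cone_id hc r) [cone v (bd c) r]ffunE.
by case: ifP => _; rewrite ?hcyc addr0.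
Qed.

Definition addch (a b : ch) : ch := [ffun t : {set 'I_n} => a t + b t].
Definition subch (a b : ch) : ch := [ffun t : {set 'I_n} => a t - b t].

Lemma bdD a b r : bd (addch a b) r = bd a r + bd b r.
Proof.
rewrite !ffunE -big_split; apply: eq_bigr => s _; by rewrite ffunE mulrDl.
Qed.

Lemma bdB a b r : bd (subch a b) r = bd a r - bd b r.
Proof.
rewrite !ffunE -sumrB; apply: eq_bigr => s _; by rewrite ffunE mulrBl.
Qed.

Lemma sin_add a b P : sin a P -> sin b P -> sin (addch a b) P.
Proof.
move=> ha hb t; rewrite ffunE; case: (eqVneq (a t) 0) => [->|/ha //].
by rewrite add0r => /hb.
Qed.

Lemma sin_sub a b P : sin a P -> sin b P -> sin (subch a b) P.
Proof.
move=> ha hb t; rewrite ffunE; case: (eqVneq (a t) 0) => [->|/ha //].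
by rewrite sub0r oppr_eq0 => /hb.
Qed.

Lemma sin_bd_size (c : ch) m : sin c (fun t => #|t| = m.+1) -> sin (bd c) (fun t => #|t| = m).
Proof.
move=> h r /bd_supp [u ur /h]; rewrite cardsU1 ur add1n; by case.
Qed.

Lemma sin_bd_down (c : ch) (P : {set 'I_n} -> Prop) :
  (forall t r : {set 'I_n}, r \subset t -> P t -> P r) -> sin c P -> sin (bd c) P.
Proof.
move=> hP h r /bd_supp [u ur /h]; apply: hP; exact: subsetUr.
Qed.

Lemma Kcx_down (D : {set {set 'I_n}}) (t r : {set 'I_n}) : r \subset t -> t \in Kcx D -> r \in Kcx D.
Proof.
move=> rt; rewrite !inE => /exists_inP [s sD ts]; apply/exists_inP; exists s => //.
exact: subset_trans rt ts.
Qed.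

Lemma Kcx_mono (D1 D2 : {set {set 'I_n}}) (t : {set 'I_n}) : D1 \subset D2 -> t \in Kcx D1 -> t \in Kcx D2.
Proof.
move=> sD; rewrite !inE => /exists_inP [s sD1 ts]; apply/exists_inP; exists s => //.
exact: (subsetP sD).
Qed.

Lemma Kcx_gen (D : {set {set 'I_n}}) (s t : {set 'I_n}) : s \in D -> t \subset s -> t \in Kcx D.
Proof. by move=> sD ts; rewrite inE; apply/exists_inP; exists s. Qed.

Lemma claim k : forall (D : {set {set 'I_n}}), (#|D| <= k)%N -> forall m, (k <= m)%N ->
  forall Z : ch, sin Z (fun t => #|t| = m) -> sin Z (fun t => t \in Kcx D) ->
  (forall r, bd Z r = 0) ->
  exists B : ch, [/\ sin B (fun t => #|t| = m.+1), sin B (fun t => t \in Kcx D)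
                   & forall r, Z r = bd B r].
Proof.
elim: k => [|k IH] D hD m hm Z hZm hZK hZc.
  move: hD; rewrite leqn0 cards_eq0 => /eqP D0.
  have Z0 : forall r, Z r = 0.
    move=> r; apply/eqP; apply: contraT => /hZK; rewrite inE D0.
    by case/exists_inP => s; rewrite inE.
  exists zch; split; try by move=> t; rewrite ffunE eqxx.
  by move=> r; rewrite Z0 bd_z.
case: (leqP #|D| k) => hDk; first exact: IH hDk m (ltnW hm) Z hZm hZK hZc.
have /set0Pn [S SD] : D != set0 by rewrite -card_gt0; exact: leq_ltn_trans (leq0n k) hDk.
set D' := D :\ S.
have hD' : #|D'| = k.
  apply/eqP; rewrite eqn_leq; move: hD hDk; rewrite (cardsD1 S D) SD add1n ltnS.
  by move=> h1 h2; apply/andP; split.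
set E := [set S :&: tau | tau in D'].
have hE : (#|E| <= k)%N by rewrite -hD'; exact: leq_imset_card.
have KE : forall t, t \in Kcx E -> t \in Kcx D' /\ t \subset S.
  move=> t; rewrite inE => /exists_inP [s /imsetP [tau tauD -> ] ts].
  rewrite subsetI in ts; case/andP: ts => tS ttau; split => //.
  exact: Kcx_gen tauD ttau.
have D'D : D' \subset D by apply: subD1set.
case: m hm hZm hZK hZc => // m' hm hZm hZK hZc.
pose Z1 : ch := [ffun t : {set 'I_n} => if t \subset S then 0 else Z t].
pose Z2 : ch := [ffun t : {set 'I_n} => if t \subset S then Z t else 0].
have hZ12 : forall t, Z t = Z1 t + Z2 t.
  by move=> t; rewrite !ffunE; case: ifP; rewrite ?add0r ?addr0.
have Z1m : sin Z1 (fun t => #|t| = m'.+1).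
  by move=> t; rewrite ffunE; case: ifP; rewrite ?eqxx // => _ /hZm.
have Z2m : sin Z2 (fun t => #|t| = m'.+1).
  by move=> t; rewrite ffunE; case: ifP; rewrite ?eqxx // => _ /hZm.
have Z1K : sin Z1 (fun t => t \in Kcx D').
  move=> t; rewrite ffunE; case: ifP => tS; rewrite ?eqxx // => /hZK.
  rewrite inE => /exists_inP [s sD ts]; apply: (Kcx_gen _ ts).
  rewrite !inE sD andbT; apply: contraFN tS => /eqP <-; exact: ts.
have Z2S : sin Z2 (fun t => t \subset S).
  by move=> t; rewrite ffunE; case: ifP; rewrite ?eqxx.
have hY : forall r, bd Z1 r = - bd Z2 r.
  move=> r; apply/eqP; rewrite -addr_eq0 -bdD; apply/eqP; rewrite -(hZc r).
  congr (bd _ r); apply/ffunP => t; by rewrite ffunE hZ12.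
have YE : sin (bd Z1) (fun t => t \in Kcx E).
  move=> r Yr.
  have /[dup] rD' : r \in Kcx D' by apply: (sin_bd_down (@Kcx_down D') Z1K).
  rewrite inE => /exists_inP [tau tauD rtau].
  have rS : r \subset S.
    apply: (sin_bd_down _ Z2S); first by move=> t q qt tS; exact: subset_trans qt tS.
    by move: Yr; rewrite hY oppr_eq0.
  apply: (Kcx_gen (s := S :&: tau)); first by apply: imset_f.
  by rewrite subsetI rS rtau.
have [W [Wm WE hW]] := IH E hE m' hm (bd Z1) (sin_bd_size Z1m) YE (bdbd Z1).
have WD' : sin W (fun t => t \in Kcx D') by move=> t /WE /KE [].
have WS : sin W (fun t => t \subset S) by move=> t /WE /KE [].
have c1 : forall r, bd (subch Z1 W) r = 0 by move=> r; rewrite bdB -hW subrr.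
have c2 : forall r, bd (addch Z2 W) r = 0 by move=> r; rewrite bdD -hW hY addrN.
have [B1 [B1m B1K hB1]] := IH D' (eq_leq hD') m'.+1 (leqW hm) (subch Z1 W)
   (sin_sub Z1m Wm) (sin_sub Z1K WD') c1.
have [B2 [B2m B2S hB2]] := cone_acyc (ltn0Sn m') (sin_add Z2m Wm) (sin_add Z2S WS) c2.
exists (addch B1 B2); split.
- exact: sin_add B1m B2m.
- apply: sin_add => t; first by move/B1K; apply: Kcx_mono D'D.
  by move/B2S; apply: Kcx_gen SD.
move=> r; rewrite bdD -hB1 -hB2 (hZ12 r) [subch _ _ r]ffunE [addch _ _ r]ffunE.
by rewrite [Z2 r + W r]addrC addrA subrK.
Qed.
End Chains.

Theorem lemma3p1 (F : fieldType) (n : nat) (hn : (0 < n)%N) (d : nat) (hd : (1 <= d)%N)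
    (D : {set {set 'I_n}})
    (hDcard : (#|D| <= d)%N)
    (hDdim : forall s, s \in D -> (#|s| <= d.+1)%N)
    (Z : chain F n)
    (hZdim : is_chain_of_size d Z)
    (hZsupp : supported_on Z (Kcx D))
    (hZcyc : bd Z = 0) :
  (exists B : chain F n,
      [/\ is_chain_of_size d.+1 B, supported_on B (Kcx D) & Z = bd B])
  /\
  (exists c : {set 'I_n} -> F,
      Z = [ffun t => \sum_(s in D | #|s| == d.+1) c s * bd_simplex F s t]).
Proof.
have [B [Bm BK hB]] : exists B : {ffun {set 'I_n} -> F},
  [/\ sin B (fun t => #|t| = d.+1), sin B (fun t => t \in Kcx D)
                   & forall r, Z r = bd B r].
  apply: (claim hDcard (leqnn d)).
  - by move=> t tZ; apply: hZdim; rewrite inE.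
  - by move=> t tZ; apply: (subsetP hZsupp); rewrite inE.
  - by move=> r; rewrite hZcyc ffunE.
have ZB : Z = bd B by apply/ffunP => r; rewrite hB.
split.
  exists B; split => //.
  - by move=> s; rewrite inE => /Bm.
  - by apply/subsetP => s; rewrite inE => /BK.
exists B; rewrite ZB; apply/ffunP => t; rewrite !ffunE [RHS]big_mkcond /=.
apply: eq_bigr => s _; case: (eqVneq (B s) 0) => [->|Bs].
  by rewrite mul0r; case: ifP.
have /[dup] sD : s \in D.
  move: (BK s Bs); rewrite inE => /exists_inP [tau tauD stau].
  have -> : s = tau.
    apply/eqP; rewrite eqEcard stau (Bm s Bs); exact: hDdim.
  exact: tauD.
by rewrite (Bm s Bs) eqxx => ->.
Qed.
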